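(* Consider natural gradient descent with momentum $\mu\in[0,1)$ on linear regression with label noise in the limit $N\to\infty$, i.e., with preconditioning matrix $\Lambda:=\frac\lambda S C^{-1}$, where $C=\frac1S(A\Sigma A+\mathrm{Tr}[A\Sigma]A+\sigma^2A)$. Let $g:=\frac{1}{1+D}\frac{1}{1+\mu}+\frac{1}{1-\mu}\frac1S$ and $$x:=\frac\lambda4g-\frac12\frac{\sigma^2}{1+D}+\frac14\sqrt{\lambda^2g^2+4\lambda\left(g-\frac{2}{1+D}\frac{1}{1+\mu}\right)\frac{\sigma^2}{1+D}+4\left(\frac{\sigma^2}{1+D}\right)^2}.$$ Then the model fluctuation is $\Sigma=xA^{-1}$, in the sense that $\Sigma=xA^{-1}$ (with the corresponding $C$ and $\Lambda$) solves the stationarity equation $(1-\mu)(\Lambda A\Sigma+\Sigma A\Lambda)-\frac{1+\mu^2}{1-\mu^2}\Lambda A\Sigma A\Lambda+\frac{\mu}{1-\mu^2}(\Lambda A\Lambda A\Sigma+\Sigma A\Lambda A\Lambda)=\Lambda C\Lambda$.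
   Context: Data: $x_i\in\mathbb{R}^D$ i.i.d. $\mathcal N(0,A)$, $A$ symmetric positive definite; $y_i=\mathbf{u}^{\mathrm T}x_i+\epsilon_i$ with label noise of mean $0$ and variance $\sigma^2$; squared loss with Hessian $A$; batch size $S$; learning rate $\lambda>0$. $\Sigma$ denotes the stationary covariance $\mathbb{E}[(\mathbf{w}-\mathbf{u})(\mathbf{w}-\mathbf{u})^{\mathrm T}]$ and $C$ the averaged minibatch noise covariance (equal to the Fisher information in this setting). *)

(* Defs.v *)
From HB Require Import structures.
From mathcomp Require Import all_boot all_order all_algebra.
Set Implicit Arguments. Unset Strict Implicit. Unset Printing Implicit Defensive.
Import Order.TTheory GRing.Theory Num.Theory.
Local Open Scope ring_scope.

Definition sym_posdef (R : realFieldType) (n : nat) (A : 'M[R]_n) : Prop :=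
  A^T = A /\ forall v : 'cV[R]_n, v != 0 -> 0 < (v^T *m A *m v) 0 0.

Definition noise_cov (R : realFieldType) (n : nat) (S : nat) (sigma : R)
  (A Sigma : 'M[R]_n) : 'M[R]_n :=
  (S%:R)^-1 *: (A *m Sigma *m A + \tr (A *m Sigma) *: A + sigma ^+ 2 *: A).

Definition ngd_precond (R : realFieldType) (n : nat) (S : nat) (lambda : R)
  (C : 'M[R]_n) : 'M[R]_n :=
  (lambda / S%:R) *: invmx C.

Definition stationary_eq (R : realFieldType) (n : nat) (mu : R)
  (Lambda A Sigma C : 'M[R]_n) : Prop :=
  (1 - mu) *: (Lambda *m A *m Sigma + Sigma *m A *m Lambda)
  - ((1 + mu ^+ 2) / (1 - mu ^+ 2)) *: (Lambda *m A *m Sigma *m A *m Lambda)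
  + (mu / (1 - mu ^+ 2)) *:
      (Lambda *m A *m Lambda *m A *m Sigma + Sigma *m A *m Lambda *m A *m Lambda)
  = Lambda *m C *m Lambda.

Definition g_coef (R : realFieldType) (D S : nat) (mu : R) : R :=
  (1 + D%:R)^-1 * (1 + mu)^-1 + (1 - mu)^-1 * (S%:R)^-1.

Definition x_coef (R : rcfType) (D S : nat) (mu lambda sigma : R) : R :=
  let g := g_coef D S mu in
  let s := sigma ^+ 2 / (1 + D%:R) in
  lambda / 4%:R * g - s / 2%:R
  + Num.sqrt (lambda ^+ 2 * g ^+ 2
              + 4%:R * lambda * (g - 2%:R / (1 + D%:R) / (1 + mu)) * s
              + 4%:R * s ^+ 2) / 4%:R.

(* Main.v *)
Require Import Defs.
From HB Require Import structures.
From mathcomp Require Import all_boot all_order all_algebra.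
From mathcomp Require Import ring lra.
Import Order.TTheory GRing.Theory Num.Theory.
Local Open Scope ring_scope.

Lemma posdef_unit (R : rcfType) (D : nat) (A : 'M[R]_D) :
  sym_posdef A -> A \in unitmx.
Proof.
case=> AT Apos; rewrite unitmxE unitfE; apply/negP => /det0P [v v0 vA].
have : v^T != 0 by rewrite trmx_eq0.
move=> /Apos; rewrite trmxK vA mul0mx mxE; by rewrite ltxx.
Qed.

Lemma x_pos (R : rcfType) (D S : nat) (mu lambda sigma : R) :
  (0 < S)%N -> 0 <= mu -> mu < 1 -> 0 < lambda ->
  0 < x_coef D S mu lambda sigma.
Proof.
move=> S0 mu0 mu1 l0.
rewrite /x_coef.
set a := (1 + D%:R)^-1 * (1 + mu)^-1.
set b := (1 - mu)^-1 * (S%:R)^-1.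
have Dp : 0 < 1 + D%:R :> R by rewrite ltr_pwDl // ler0n.
have Sp : 0 < S%:R :> R by rewrite ltr0n.
have ap : 0 < a by rewrite /a mulr_gt0 // invr_gt0 //; lra.
have bp : 0 < b by rewrite /b mulr_gt0 // invr_gt0 //; lra.
have -> : g_coef D S mu = a + b by [].
set s := sigma ^+ 2 / (1 + D%:R).
have s0 : 0 <= s by rewrite /s divr_ge0 // ?sqr_ge0 // ltW.
set d := (X in Num.sqrt X).
have ed : d = (2 * s - lambda * (a + b)) ^+ 2 + 8 * lambda * s * b.
  rewrite /d.
  have -> : 2%:R / (1 + D%:R) / (1 + mu) = 2 * a by rewrite /a; ring.
  ring.
have d0 : 0 <= d.
  rewrite ed; apply: addr_ge0; first exact: sqr_ge0.
  apply: mulr_ge0; last lra; apply: mulr_ge0 => //; apply: mulr_ge0; lra.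
set q := Num.sqrt d.
have q0 : 0 <= q := sqrtr_ge0 d.
have qq : q ^+ 2 = d := sqr_sqrtr d0.
have lab : 0 < lambda * (a + b) by apply: mulr_gt0 => //; lra.
have key : 2 * s - lambda * (a + b) < q.
  rewrite ltNge; apply/negP => H.
  have H2 : q ^+ 2 <= (2 * s - lambda * (a + b)) ^+ 2.
    by rewrite ler_sqr // nnegrE //; apply: le_trans H.
  have : 8 * lambda * s * b <= 0 by move: H2; rewrite qq ed; lra.
  have lb : 0 < 8 * lambda * b by apply: mulr_gt0 => //; apply: mulr_gt0 => //; lra.
  move=> H3.
  have s00 : s <= 0.
    have : (8 * lambda * b) * s <= 0 by move: H3; rewrite -mulrA (mulrC s) mulrA.
    by rewrite pmulr_rle0.
  lra.
have -> : (4%:R : R) = 4 by [].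
have -> : (2%:R : R) = 2 by [].
lra.
Qed.

Lemma x_quad (R : rcfType) (D S : nat) (mu lambda sigma : R) :
  (0 < S)%N -> 0 <= mu -> mu < 1 -> 0 < lambda ->
  let x := x_coef D S mu lambda sigma in
  2 * x ^+ 2 + 2 * x * (sigma ^+ 2 / (1 + D%:R)) - lambda * g_coef D S mu * x
   - lambda * (sigma ^+ 2 / (1 + D%:R)) * ((1 - mu)^-1 * (S%:R)^-1) = 0.
Proof.
move=> S0 mu0 mu1 l0 x.
rewrite /x /x_coef.
set a := (1 + D%:R)^-1 * (1 + mu)^-1.
set b := (1 - mu)^-1 * (S%:R)^-1.
have Dp : 0 < 1 + D%:R :> R by rewrite ltr_pwDl // ler0n.
have Sp : 0 < S%:R :> R by rewrite ltr0n.
have bp : 0 < b by rewrite /b mulr_gt0 // invr_gt0 //; lra.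
have -> : g_coef D S mu = a + b by [].
set s := sigma ^+ 2 / (1 + D%:R).
have s0 : 0 <= s by rewrite /s divr_ge0 // ?sqr_ge0 // ltW.
set d := (X in Num.sqrt X).
have ed : d = (2 * s - lambda * (a + b)) ^+ 2 + 8 * lambda * s * b.
  rewrite /d.
  have -> : 2%:R / (1 + D%:R) / (1 + mu) = 2 * a by rewrite /a; ring.
  ring.
have d0 : 0 <= d.
  rewrite ed; apply: addr_ge0; first exact: sqr_ge0.
  apply: mulr_ge0; last lra; apply: mulr_ge0 => //; apply: mulr_ge0; lra.
set q := Num.sqrt d.
have qq : q ^+ 2 = d := sqr_sqrtr d0.
transitivity ((q ^+ 2 - d) / 8); last by rewrite qq subrr mul0r.
by rewrite ed; field.
Qed.


Theorem proposition6 (R : rcfType) (D S : nat) (A : 'M[R]_D)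
  (mu lambda sigma : R) :
  (0 < D)%N -> (0 < S)%N -> sym_posdef A ->
  0 <= mu -> mu < 1 -> 0 < lambda ->
  let Sigma := x_coef D S mu lambda sigma *: invmx A in
  let C := noise_cov S sigma A Sigma in
  let Lambda := ngd_precond S lambda C in
  stationary_eq mu Lambda A Sigma C.
Proof.
move=> D0 S0 HA mu0 mu1 l0.
have Au := @posdef_unit R D A HA.
have xp := @x_pos R D S mu lambda sigma S0 mu0 mu1 l0.
set x := x_coef D S mu lambda sigma in xp *.
move=> Sigma C Lambda.
set Ai := invmx A.
have AAi : A *m Ai = 1%:M by rewrite mulmxV.
have AiA : Ai *m A = 1%:M by rewrite mulVmx.
set M := x + x * D%:R + sigma ^+ 2.
have Sp : 0 < S%:R :> R by rewrite ltr0n.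
have Dp : 0 <= D%:R :> R by rewrite ler0n.
have M0 : 0 < M.
  rewrite /M; have := sqr_ge0 sigma; have : 0 <= x * D%:R by rewrite mulr_ge0 // ltW.
  lra.
have eC : C = (M / S%:R) *: A.
  rewrite /C /noise_cov /Sigma -!scalemxAr AAi -scalemxAl mul1mx mxtraceZ mxtrace1.
  by rewrite -!scalerDl scalerA mulrC.
have eL : Lambda = (lambda / M) *: Ai.
  rewrite /Lambda /ngd_precond eC invmxZ ?unitmxZ ?unitfE // ?scalerA.
    congr (_ *: _); field; apply/andP; split; rewrite gt_eqF //.
  by rewrite mulf_neq0 ?invr_eq0 // gt_eqF.
have prod (a b : R) : (a *: Ai) *m A *m (b *: Ai) = (a * b) *: Ai.
  by rewrite -scalemxAl -scalemxAr -scalemxAl AiA mul1mx scalerA mulrC.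
have prod2 (a c b : R) : (a *: Ai) *m (c *: A) *m (b *: Ai) = (a * c * b) *: Ai.
  have -> : (a *: Ai) *m (c *: A) = (a * c) *: Ai *m A.
    by rewrite -scalemxAr -!scalemxAl scalerA mulrC.
  by rewrite prod.
rewrite /stationary_eq eC eL /Sigma -/Ai !prod prod2.
have Q0 := @x_quad R D S mu lambda sigma S0 mu0 mu1 l0.
rewrite -/x in Q0.
apply/matrixP => i j; rewrite !mxE.
move: (Ai i j) => y.
apply/eqP; rewrite -subr_eq0; apply/eqP.
pose s := sigma ^+ 2 / (1 + D%:R).
pose g := g_coef D S mu.
pose b := (1 - mu)^-1 * (S%:R)^-1.
transitivity (lambda * (1 - mu) * (1 + D%:R) / M ^+ 2 *
   (2 * x ^+ 2 + 2 * x * s - lambda * g * x - lambda * s * b) * y).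
  rewrite /s /g /b /g_coef /M; field.
  repeat (apply/andP; split); apply: lt0r_neq0 => //; try lra; nra.
by rewrite Q0 mulr0 mul0r.
Qed.
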